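(* Let $n\in\mathbb N$, $r>0$, and let $\gamma_1,\gamma_2:[-r,r]\to\mathbb R^m$ be continuous. Let $\epsilon\ne0$ with $n|\epsilon|<r$. Define, for $\gamma\in\{\gamma_1,\gamma_2\}$, $$v_n(\gamma,\epsilon)=\epsilon^{-1}\sum_{k=-n}^n p_{nk}\,\gamma(k\epsilon),$$ where $p_{n0}=0$ and $p_{nk}=\frac{(-1)^{k+1}(n!)^2}{k(n+k)!(n-k)!}$ for $1\le|k|\le n$. Then $$\bigl|v_n(\gamma_2,\epsilon)-v_n(\gamma_1,\epsilon)\bigr|\le |\epsilon|^{-1}H_n\,\|\gamma_2-\gamma_1\|,$$ where $\|\cdot\|$ is the supremum norm on $[-r,r]$ and $H_n=\sum_{k=1}^n k^{-1}$. *)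

(* Defs.v *)
From HB Require Import structures.
From mathcomp Require Import all_boot all_order all_algebra.
From mathcomp Require Import all_classical all_reals all_analysis.
Set Implicit Arguments. Unset Strict Implicit. Unset Printing Implicit Defensive.
Import Order.TTheory GRing.Theory Num.Theory.
Import numFieldNormedType.Exports.
Local Open Scope classical_set_scope.
Local Open Scope ring_scope.

(* p_{nk}: p_{n0} = 0, p_{nk} = (-1)^{k+1} (n!)^2 / (k (n+k)! (n-k)!) for k <> 0.
   (n+k) and (n-k) are converted to nat by absz; they are >= 0 when |k| <= n. *)
Definition pcoef (R : realType) (n : nat) (k : int) : R :=
  if k == 0 then 0
  else ((-1) ^ (k + 1) * ((n`!) ^ 2)%:R) /
       (k%:~R * ((absz (n%:Z + k))`!)%:R * ((absz (n%:Z - k))`!)%:R).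

Definition vn (R : realType) (m n : nat) (gamma : R -> 'rV[R]_m) (eps : R)
  : 'rV[R]_m :=
  eps^-1 *: \sum_(i < (2 * n).+1)
     pcoef R n (i%:Z - n%:Z) *: gamma ((i%:Z - n%:Z)%:~R * eps).

Definition supnorm (R : realType) (m : nat) (r : R) (f : R -> 'rV[R]_m) : R :=
  sup [set `|f t| | t in `[- r, r]].

Definition harmonic_number (R : realType) (n : nat) : R :=
  \sum_(1 <= k < n.+1) (k%:R)^-1.

(* Main.v *)
Require Import Defs.
From HB Require Import structures.
From mathcomp Require Import all_boot all_order all_algebra.
From mathcomp Require Import all_classical all_reals all_analysis.
From mathcomp Require Import ring lra zify.
From Stdlib Require Import Lia.
Import Order.TTheory GRing.Theory Num.Theory.
Import numFieldNormedType.Exports.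
Local Open Scope classical_set_scope.
Local Open Scope ring_scope.

Definition bb (R : realType) (N k : nat) : R :=
  ((N`! ^ 2)%N)%:R / (((N + k)`!)%:R * ((N - k)`!)%:R).

Lemma fact_neq0 (R : realType) n : (n`!)%:R != 0 :> R.
Proof. by rewrite pnatr_eq0 -lt0n fact_gt0. Qed.

Lemma pos1 (R : realType) (a : R) : 0 <= a -> 1 + a != 0.
Proof. by move=> h; rewrite gt_eqF // ltr_pwDl. Qed.

Lemma pos2 (R : realType) (a : R) : 0 <= a -> 2 + a != 0.
Proof. by move=> h; rewrite gt_eqF // ltr_pwDl. Qed.

Lemma bb_step (R : realType) N k : (k < N)%N ->
  bb R N k * (N - k)%:R = bb R N k.+1 * (N + k.+1)%:R.
Proof.
move=> lt; rewrite /bb.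
have [j ->] : exists j, N = (k + j.+1)%N by exists (N - k.+1)%N; lia.
have -> : (k + j.+1 - k = j.+1)%N by lia.
have -> : (k + j.+1 - k.+1 = j)%N by lia.
have -> : (k + j.+1 + k.+1 = (k + j.+1 + k).+1)%N by lia.
rewrite !factS !natrM.
have h1 := fact_neq0 R (k + j.+1 + k).
have h2 := fact_neq0 R j.
have h3 : (j.+1)%:R != 0 :> R by rewrite pnatr_eq0.
have h4 : ((k + j.+1 + k).+1)%:R != 0 :> R by rewrite pnatr_eq0.
field.
by rewrite h1 h2 !pos1 // ?addr_ge0 ?ler0n.
Qed.

Lemma sum_kbb (R : realType) N :
  \sum_(1 <= k < N.+1) (2 * k%:R * bb R N k) = N%:R.
Proof.
pose c k : R := if (k <= N)%N then (N + k)%:R * bb R N k else 0.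
have step : forall k, (1 <= k <= N)%N -> 2 * k%:R * bb R N k = c k - c k.+1.
  move=> k /andP[k1 kN]; rewrite /c kN.
  case: ltnP => [kN'|NK].
    rewrite [X in _ - X]mulrC -bb_step // natrB // natrD; ring.
  have -> : k = N by apply/eqP; rewrite eqn_leq kN NK.
  rewrite subr0 natrD; ring.
rewrite (eq_big_nat _ _ (F2 := fun k => - (c k.+1 - c k))); last first.
  by move=> k hk; rewrite step // opprB.
rewrite sumrN telescope_sumr // /c ltnn.
rewrite sub0r opprK.
clear step c; case: N => [|N] //=.
rewrite /bb subSS subn0 addn1 !factS natrX !natrM.
have h1 := fact_neq0 R N.
have h3 : (N.+1)%:R != 0 :> R by rewrite pnatr_eq0.
field.
by rewrite h1 pos1 ?pos2 // ler0n.
Qed.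

Lemma bb_up (R : realType) N k : (1 <= k <= N)%N ->
  bb R N.+1 k / k%:R = bb R N k / k%:R + k%:R * bb R N.+1 k / (N.+1%:R ^+ 2).
Proof.
move=> /andP[k1 kN].
have [j ->] : exists j, N = (k + j)%N by exists (N - k)%N; lia.
rewrite /bb.
have -> : (k + j - k = j)%N by lia.
have -> : ((k + j).+1 - k = j.+1)%N by lia.
have -> : ((k + j).+1 + k = (k + j + k).+1)%N by lia.
rewrite !factS !natrX !natrM.
have h1 := fact_neq0 R (k + j + k).
have h2 := fact_neq0 R j.
have h5 := fact_neq0 R (k + j).
have hk : k%:R != 0 :> R by rewrite pnatr_eq0 -lt0n.
idtac.
field.
by rewrite h1 h2 hk !pos1 // ?addr_ge0 ?ler0n.
Qed.

Lemma sum_bb (R : realType) N :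
  2 * \sum_(1 <= k < N.+1) bb R N k / k%:R = harmonic_number R N.
Proof.
elim: N => [|N IH]; first by rewrite /harmonic_number !big_geq // mulr0.
rewrite /harmonic_number [in RHS]big_nat_recr //= -/(harmonic_number R N) -IH.
rewrite big_nat_recr //=.
rewrite (eq_big_nat _ _ (F2 := fun k => bb R N k / k%:R
   + k%:R * bb R N.+1 k / (N.+1%:R ^+ 2))); last by move=> k hk; rewrite bb_up.
rewrite big_split /= -mulr_suml.
have := sum_kbb R N.+1.
rewrite big_nat_recr //=.
under eq_bigr do rewrite -mulrA.
rewrite -mulr_sumr.
set A := \sum_(_ <= _ < _) _.
set S := \sum_(_ <= _ < _) _.
move=> hA; clearbody A S.
have h3 : (N.+1)%:R != 0 :> R by rewrite pnatr_eq0.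
have e2 : 2 * A = N.+1%:R - 2 * N.+1%:R * bb R N.+1 N.+1.
  by rewrite -[X in X = _](addrK (2 * N.+1%:R * bb R N.+1 N.+1)) hA.
have -> : A = (2 * A) / 2 by field.
rewrite e2; field; by rewrite pos1 ?ler0n.
Qed.

Lemma norm_m1z (R : realType) (z : int) : `|(-1) ^ z : R| = 1.
Proof.
case: z => j /=; first by rewrite normrX normrN1 expr1n.
by rewrite normfV normrX normrN1 expr1n invr1.
Qed.

Lemma abs_pcoef_pos (R : realType) n k : (1 <= k <= n)%N ->
  `|pcoef R n k%:Z| = bb R n k / k%:R.
Proof.
move=> /andP[k1 kn]; rewrite /pcoef.
have -> : (k%:Z == 0) = false by apply/negbTE; rewrite eqz_nat -lt0n.
rewrite -PoszD subzn // absz_nat /=.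
rewrite normrM normfV normrM norm_m1z mul1r !normrM pmulrn !normr_nat /bb.
have h1 := fact_neq0 R (n + k).
have h2 := fact_neq0 R (n - k).
have hk : k%:R != 0 :> R by rewrite pnatr_eq0 -lt0n.
by field; rewrite h1 h2 hk.
Qed.

Lemma abs_pcoef_neg (R : realType) n k : (1 <= k <= n)%N ->
  `|pcoef R n (- k%:Z)| = bb R n k / k%:R.
Proof.
move=> /andP[k1 kn]; rewrite /pcoef.
have -> : (- k%:Z == 0) = false by apply/negbTE; rewrite oppr_eq0 eqz_nat -lt0n.
rewrite opprK -PoszD subzn // absz_nat /=.
rewrite normrM normfV normrM norm_m1z mul1r !normrM mulrNz normrN pmulrn !normr_nat /bb.
have h1 := fact_neq0 R (n + k).
have h2 := fact_neq0 R (n - k).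
have hk : k%:R != 0 :> R by rewrite pnatr_eq0 -lt0n.
by field; rewrite h1 h2 hk.
Qed.

Lemma sum_abs_pcoef (R : realType) n :
  \sum_(i < (2 * n).+1) `|pcoef R n (i%:Z - n%:Z)| = harmonic_number R n.
Proof.
rewrite -(big_mkord xpredT (fun i => `|pcoef R n (i%:Z - n%:Z)|)).
have hn : (n <= (2 * n).+1)%N by lia.
rewrite (@big_cat_nat _ _ _ n) //=.
rewrite [X in _ + X](_ : _ = \sum_(0 + n <= i < (2 * n).+1) `|pcoef R n (i%:Z - n%:Z)|); last by rewrite add0n.
rewrite big_addn.
have -> : ((2 * n).+1 - n = n.+1)%N by lia.
rewrite big_nat_recl //.
rewrite [X in _ + (X + _)](_ : _ = 0); last by rewrite add0n subrr /pcoef eqxx normr0.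
rewrite add0r.
rewrite big_nat_rev /= add0n.
rewrite (eq_big_nat _ _ (F2 := fun i => bb R n i.+1 / i.+1%:R)); last first.
  move=> i /andP[_ hi].
  have -> : ((n - i.+1)%:Z - n%:Z = - (i.+1)%:Z).
    by rewrite -subzn // addrAC subrr add0r.
  by rewrite abs_pcoef_neg // hi.
rewrite [X in _ + X](eq_big_nat _ _ (F2 := fun i => bb R n i.+1 / i.+1%:R)); last first.
  move=> i /andP[_ hi].
  have -> : ((i.+1 + n)%:Z - n%:Z = (i.+1)%:Z).
    by rewrite PoszD addrK.
  by rewrite abs_pcoef_pos // hi.
by rewrite -sum_bb big_add1 /=; ring.
Qed.

Lemma bnd {R : realType} {m : nat} {f : R -> 'rV[R]_m} {r : R} :
  {within `[- r, r], continuous f} ->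
  exists M, forall t, - r <= t <= r -> `|f t| <= M.
Proof.
move=> hf.
have := compact_bounded (continuous_compact hf (@segment_compact R (-r) r)).
case=> M [Mreal HM].
exists (M + 1) => t ht.
have ltae : M < M + 1 by rewrite ltrDl.
have := HM (M + 1) ltae.
apply; exists t => //=; by rewrite in_itv /=.
Qed.

Lemma tbound (R : realType) (n : nat) (r eps : R) (i : 'I_(2 * n).+1) :
  n%:R * `|eps| < r -> - r <= (i%:Z - n%:Z)%:~R * eps <= r.
Proof.
move=> hr; rewrite -ler_norml normrM.
have hz : `|i%:Z - n%:Z| <= n%:Z.
  rewrite ler_norml; have := ltn_ord i; lia.
apply: le_trans (ltW hr); apply: ler_wpM2r => //.
rewrite -intr_norm; change (`|i%:Z - n%:Z|%:~R <= (n%:Z)%:~R :> R).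
by rewrite ler_int.
Qed.

Theorem mainTheorem3 (R : realType) (m n : nat) (r : R)
  (gamma1 gamma2 : R -> 'rV[R]_m) (eps : R) :
  0 < r ->
  {within `[- r, r], continuous gamma1} ->
  {within `[- r, r], continuous gamma2} ->
  eps != 0 ->
  n%:R * `|eps| < r ->
  `|vn n gamma2 eps - vn n gamma1 eps|
    <= `|eps|^-1 * @harmonic_number R n * supnorm r (gamma2 - gamma1).
Proof.
move=> r0 c1 c2 e0 hr.
have [M1 hM1] := bnd c1.
have [M2 hM2] := bnd c2.
have hsup : has_sup [set `|(gamma2 - gamma1) t| | t in `[- r, r]].
  split.
    exists `|(gamma2 - gamma1) 0|; exists 0 => //=.
    by rewrite in_itv /= oppr_le0 ltW.
  exists (M2 + M1) => _ [t ht <-] /=.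
  move: ht; rewrite /= in_itv /= => ht.
  apply: le_trans (ler_normB _ _) _.
  by apply: lerD; [exact: hM2 | exact: hM1].
have hle : forall t, - r <= t <= r ->
    `|gamma2 t - gamma1 t| <= supnorm r (gamma2 - gamma1).
  move=> t ht; apply: sup_upper_bound => //; exists t => //.
rewrite /vn -scalerBr -sumrB.
under eq_bigr do rewrite -scalerBr.
rewrite normrZ normfV -mulrA ler_wpM2l ?invr_ge0 ?normr_ge0 //.
apply: le_trans (ler_norm_sum _ _ _) _.
rewrite -sum_abs_pcoef mulr_suml.
apply: ler_sum => i _.
rewrite normrZ ler_wpM2l ?normr_ge0 //.
exact/hle/tbound.
Qed.
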